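(* Assume $C^\top C\succ0$. Let $(\gamma_n)_{n\in\mathbb{N}}$ be a sequence of positive numbers with $\gamma_n\to0$, and for $\widetilde W\in\mathbb{R}^{p^2}$ define $$F^{\gamma_n}(\widetilde W)=f(\widetilde W)+\gamma_n\,g\big((V_2\otimes V_1)\widetilde W\big)+\delta_{\{\widehat{\mathcal{A}}\widetilde W=0\}}(\widetilde W),\qquad F(\widetilde W)=f(\widetilde W)+\delta_{\{\widehat{\mathcal{A}}\widetilde W=0\}}(\widetilde W).$$ Then $\inf F^{\gamma_n}\to\inf F$.
   Context: Let $n,m,M\ge1$, $p=m+n$. For $i=1,\dots,M$ let $A_i\in\mathbb{R}^{n\times n}$, $B_{2,i}\in\mathbb{R}^{n\times m}$, $F_i=\begin{bmatrix}A_i&B_{2,i}\\0&0\end{bmatrix}$. Let $B_1\in\mathbb{R}^{n\times l}$, $C\in\mathbb{R}^{q\times n}$, $D\in\mathbb{R}^{q\times m}$ with $C^\top D=0$, $D^\top D\succ0$, $B_1B_1^\top\succ0$; $Q=\begin{bmatrix}B_1B_1^\top&0\\0&0\end{bmatrix}$, $R=\begin{bmatrix}C^\top C&0\\0&D^\top D\end{bmatrix}$, $V_1=[0,\ I_m]\in\mathbb{R}^{m\times p}$, $V_2=[I_n,\ 0]\in\mathbb{R}^{n\times p}$, $\Psi_i(W)=-V_2(F_iW+WF_i^\top+Q)V_2^\top$. $\mathrm{vec}$ is column-stacking, so $(V_2\otimes V_1)\mathrm{vec}(W)=\mathrm{vec}(V_1WV_2^\top)$. $\Gamma^k_+=\{\mathrm{vec}(X):X\in\mathbb{S}^k_+\}$,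 $\delta_S$ the indicator function of $S$. For $\widetilde W=\mathrm{vec}(W)$: $f(\widetilde W)=\langle\mathrm{vec}(R),\widetilde W\rangle+\delta_{\Gamma^p_+}(\widetilde W)+\sum_{i=1}^M\delta_{\Gamma^n_+}(\mathrm{vec}(\Psi_i(W)))$. $\widehat{\mathcal{A}}$ is the linear map with $\widehat{\mathcal{A}}\,\mathrm{vec}(W)=(W_{ij})_{1\le i<j\le n}$. $g(P)=\sum_{i,j}w_{ij}|P_{ij}|$ for $P\in\mathbb{R}^{mn}$ viewed as an $m\times n$ matrix, with fixed weights $w_{ij}>0$. *)

(* Defs.v *)
From HB Require Import structures.
From mathcomp Require Import all_boot all_order all_algebra.
From mathcomp Require Import all_classical all_reals all_analysis.
Set Implicit Arguments. Unset Strict Implicit. Unset Printing Implicit Defensive.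
Import Order.TTheory GRing.Theory Num.Theory.
Local Open Scope ring_scope.

Section Defs.
Variable R : realType.

Definition qform k (X : 'M[R]_k) (x : 'cV[R]_k) : R := (x^T *m X *m x) 0 0.

Definition psd k (X : 'M[R]_k) : Prop := X^T = X /\ forall x, 0 <= qform X x.

Definition pd k (X : 'M[R]_k) : Prop := X^T = X /\ forall x, x != 0 -> 0 < qform X x.

Definition indic (P : Prop) : \bar R := if `[< P >] then 0%E else +oo%E.

Variables (n m l q M : nat).
Variables (A : 'I_M -> 'M[R]_n) (B2 : 'I_M -> 'M[R]_(n, m))
          (B1 : 'M[R]_(n, l)) (C : 'M[R]_(q, n)) (D : 'M[R]_(q, m))
          (w : 'M[R]_(m, n)).

(* p = n + m; first n coordinates then m coordinates *)
Definition Fm (i : 'I_M) : 'M[R]_(n + m) := block_mx (A i) (B2 i) 0 0.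
Definition Qm : 'M[R]_(n + m) := block_mx (B1 *m B1^T) 0 0 0.
Definition Rm : 'M[R]_(n + m) := block_mx (C^T *m C) 0 0 (D^T *m D).
Definition V1 : 'M[R]_(m, n + m) := row_mx 0 1%:M.
Definition V2 : 'M[R]_(n, n + m) := row_mx 1%:M 0.

Definition Psi (i : 'I_M) (W : 'M[R]_(n + m)) : 'M[R]_n :=
  - (V2 *m (Fm i *m W + W *m (Fm i)^T + Qm) *m V2^T).

Definition inner_vec (W : 'M[R]_(n + m)) : R := \sum_i \sum_j Rm i j * W i j.

Definition fobj (W : 'M[R]_(n + m)) : \bar R :=
  ((inner_vec W)%:E + indic (psd W) + \sum_(i < M) indic (psd (Psi i W)))%E.

(* g(P), P viewed as an m x n matrix *)
Definition gobj (P : 'M[R]_(m, n)) : R := \sum_i \sum_j w i j * `|P i j|.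

(* (V2 (x) V1) vec W = vec (V1 W V2^T) *)
Definition Kron_apply (W : 'M[R]_(n + m)) : 'M[R]_(m, n) := V1 *m W *m V2^T.

(* A-hat vec W = 0  <=>  W_ij = 0 for 1 <= i < j <= n *)
Definition Ahat_zero (W : 'M[R]_(n + m)) : Prop :=
  forall i j : 'I_(n + m), (i < j)%N -> (j < n)%N -> W i j = 0.

Definition Fgamma (gam : R) (W : 'M[R]_(n + m)) : \bar R :=
  (fobj W + (gam * gobj (Kron_apply W))%:E + indic (Ahat_zero W))%E.

Definition Fobj (W : 'M[R]_(n + m)) : \bar R :=
  (fobj W + indic (Ahat_zero W))%E.

End Defs.

(* Main.v *)
Require Import Defs.
From HB Require Import structures.
From mathcomp Require Import all_boot all_order all_algebra.
From mathcomp Require Import all_classical all_reals all_analysis.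
From mathcomp Require Import lra.
Import Order.TTheory GRing.Theory Num.Theory.
Local Open Scope ring_scope.
Local Open Scope classical_set_scope.

Lemma squeeze_inf (R : realType) (u : nat -> \bar R) (L : \bar R) :
  (forall k, (L <= u k)%E) ->
  (forall x, (L < x)%E -> \forall k \near \oo, (u k < x)%E) ->
  u @ \oo --> L.
Proof.
move=> Hge Hlt.
case: L Hge Hlt => [r| |] Hge Hlt.
- apply/fine_cvgP; split.
    have := Hlt (r + 1)%:E; rewrite lte_fin ltrDl ltr01 => /(_ isT).
    apply: filterS => k Hk; rewrite fin_numE; apply/andP; split.
      by apply/eqP => e; have := Hge k; rewrite e.
    by apply/eqP => e; move: Hk; rewrite e.
  apply/cvgrPdist_lt => e e0.
  have := Hlt (r + e)%:E; rewrite lte_fin ltrDl e0 => /(_ isT).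
  apply: filterS => k Hk.
  have := Hge k; move: Hk => /=; case: (u k) => [s| |] //=; rewrite !lte_fin !lee_fin => h1 h2.
  rewrite ltr_norml; apply/andP; split; lra.
- have -> : u = fun=> +oo%E.
    by apply: boolp.funext => k; apply/eqP; rewrite eq_le leey Hge.
  exact: cvg_cst.
- apply: (proj2 (cvgeNyPlt u)) => A; exact: (Hlt _ (ltNyr A)).
Qed.

Theorem proposition16 (R : realType) (n m l q M : nat)
  (A : 'I_M -> 'M[R]_n) (B2 : 'I_M -> 'M[R]_(n, m))
  (B1 : 'M[R]_(n, l)) (C : 'M[R]_(q, n)) (D : 'M[R]_(q, m))
  (w : 'M[R]_(m, n)) (gam : nat -> R) :
  (1 <= n)%N -> (1 <= m)%N -> (1 <= M)%N ->
  C^T *m D = 0 ->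
  pd (D^T *m D) ->
  pd (B1 *m B1^T) ->
  pd (C^T *m C) ->
  (forall i j, 0 < w i j) ->
  (forall k, 0 < gam k) ->
  gam @ \oo --> 0 ->
  (fun k => ereal_inf (range (Fgamma A B2 B1 C D w (gam k))))
    @ \oo --> ereal_inf (range (Fobj A B2 B1 C D)).
Proof.
move=> _ _ _ _ _ _ _ wpos gpos g0.
set G := fun W => gobj w (Kron_apply W).
have Gge0 : forall W, 0 <= G W.
  move=> W; apply: sumr_ge0 => i _; apply: sumr_ge0 => j _.
  by apply: mulr_ge0; [exact: ltW | exact: normr_ge0].
have key : forall k W, Fgamma A B2 B1 C D w (gam k) W
    = (Fobj A B2 B1 C D W + (gam k * G W)%:E)%E.
  by move=> k W; rewrite /Fgamma /Fobj addeAC.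
apply: squeeze_inf.
- move=> k; apply: le_ereal_inf_tmp => _ [W _ <-].
  rewrite key; apply: le_trans (leeDl _ _).
    exact: ereal_inf_lbound.
  by rewrite lee_fin; apply: mulr_ge0; [exact: ltW|].
- move=> x Lx.
  have [_ [W _ <-] FWx] := ereal_inf_lt Lx.
  have ub : forall k, (ereal_inf (range (Fgamma A B2 B1 C D w (gam k)))
      <= Fobj A B2 B1 C D W + (gam k * G W)%:E)%E.
    by move=> k; rewrite -key; apply: ereal_inf_lbound; exists W.
  move: FWx ub; case: (Fobj A B2 B1 C D W) => [r| |] FWx ub.
  + case: x Lx FWx => [s| |] Lx FWx //.
    * have hc : (fun k => gam k * G W) @ \oo --> 0.
        by rewrite -(mul0r (G W)); apply: cvgMr_tmp.
      have hk : \forall k \near \oo, gam k * G W < s - r.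
        by apply: (cvgr_lt _ hc); rewrite subr_gt0 -lte_fin.
      move: hk; apply: filterS => k hk; apply: le_lt_trans (ub k) _.
      by rewrite lte_fin; lra.
    * by apply: nearW => k; apply: le_lt_trans (ub k) _; exact: ltry.
  + by rewrite ltNge leey in FWx.
  + apply: nearW => k; apply: le_lt_trans (ub k) _.
    by rewrite /=; rewrite (le_lt_trans (leNye _) Lx).
Qed.
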